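(* Every finite field extension $K$ of a Brauer field $k$ is a Brauer field.
   Context: A field $k$ is a Brauer field if for every $d\ge 1$ there is a number $N_k(d)$ such that every equation $a_1x_1^d+\cdots+a_nx_n^d=0$ with $n>N_k(d)$ and $a_i\in k$ has a non-trivial solution in $k^n$. *)

(* Defs.v *)
From HB Require Import structures.
From mathcomp Require Import all_boot all_order all_algebra all_field.
Set Implicit Arguments. Unset Strict Implicit. Unset Printing Implicit Defensive.
Import GRing.Theory.
Local Open Scope ring_scope.

Definition brauer_field (k : fieldType) : Prop :=
  forall d : nat, (1 <= d)%N ->
    exists N : nat, forall (n : nat) (a : 'I_n -> k), (N < n)%N ->
      exists x : 'I_n -> k, (exists i, x i != 0) /\ \sum_(i < n) a i * x i ^+ d = 0.

(* Main.v *)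
Require Import Defs.
From HB Require Import structures.
From mathcomp Require Import all_boot all_order all_algebra all_field.
From mathcomp Require Import ring.

Set Implicit Arguments. Unset Strict Implicit. Unset Printing Implicit Defensive.
Import GRing.Theory.
Local Open Scope ring_scope.

Section Sys.
Variables (k : fieldType) (d : nat).
Hypothesis d_gt0 : (0 < d)%N.

Definition solv (r : nat) (T : finType) : Prop :=
  forall a : 'I_r -> T -> k, exists x : T -> k,
    (exists t, x t != 0) /\ forall j, \sum_t a j t * x t ^+ d = 0.

Lemma solv_inj r (S T : finType) (f : S -> T) : injective f ->
  solv r S -> solv r T.
Proof.
move=> finj hS a.
have [x' [[s0 hs0] hx']] := hS (fun j s => a j (f s)).
pose x t := if [pick s | f s == t] is Some s then x' s else 0.
have xf s : x (f s) = x' s.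
  rewrite /x; case: pickP => [s' /eqP/finj -> //|/(_ s)]; by rewrite eqxx.
exists x; split; first by exists (f s0); rewrite xf.
move=> j; rewrite (bigID (fun t => t \in [set f s | s in S])) /=.
rewrite big_imset /=; last by move=> ? ? _ _; apply: finj.
rewrite [X in _ + X]big1 ?addr0.
  rewrite -[RHS](hx' j); apply: eq_big => // s; by rewrite xf.
move=> t tN; rewrite /x; case: pickP => [s /eqP fs|_].
  by move: tN; rewrite -fs imset_f.
by rewrite expr0n eqn0Ngt d_gt0 mulr0.
Qed.

Lemma solv_card r (S T : finType) : (#|S| <= #|T|)%N -> solv r S -> solv r T.
Proof.
move=> h; apply: (@solv_inj r S T (fun s => enum_val (widen_ord h (enum_rank s)))).
by move=> s1 s2 /enum_val_inj /(congr1 val) /= /val_inj /enum_rank_inj.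
Qed.

Hypothesis Bk : brauer_field k.

Lemma solv1 : exists N, forall T : finType, (N < #|T|)%N -> solv 1 T.
Proof.
have [N HN] := Bk d_gt0.
exists N => T hT; apply: (@solv_card 1 'I_N.+1); first by rewrite card_ord.
move=> a; have [x [hx0 hx]] := HN N.+1 (a ord0) (ltnSn N).
by exists x; split => // j; rewrite ord1.
Qed.

Lemma solv_sys r : exists N, forall T : finType, (N < #|T|)%N -> solv r T.
Proof.
elim: r => [|r [Nr IH]].
  exists 0%N => T hT a; have [t0 _] := card_gt0P hT.
  exists (fun _ => 1); split; [by exists t0; rewrite oner_eq0 | by case].
have [N0 H0] := solv1.
exists (Nr.+1 * N0.+1)%N => T hT.
apply: (@solv_card _ ('I_Nr.+1 * 'I_N0.+1)%type); first by rewrite card_prod !card_ord ltnW.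
move=> a.
have hy : forall b : 'I_Nr.+1, exists y : 'I_N0.+1 -> k,
    (exists l, y l != 0) /\ \sum_(l < N0.+1) a ord0 (b, l) * y l ^+ d = 0.
  move=> b; have [y [hy1 hy2]] := H0 'I_N0.+1 (ltac:(by rewrite card_ord))
     (fun _ l => a ord0 (b, l)).
  by exists y; split => //; apply: (hy2 ord0).
have [y Y] := fin_all_exists hy.
have [t [[b0 hb0] ht]] := IH 'I_Nr.+1 (ltac:(by rewrite card_ord))
   (fun j b => \sum_(l < N0.+1) a (lift ord0 j) (b, l) * y b l ^+ d).
exists (fun p => t p.1 * y p.1 p.2) => /=.
split.
  have [[l0 hl0] _] := Y b0; exists (b0, l0); by rewrite /= mulf_neq0.
have E j : \sum_p a j p * (t p.1 * y p.1 p.2) ^+ d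
    = \sum_b (\sum_(l < N0.+1) a j (b, l) * y b l ^+ d) * t b ^+ d.
  transitivity (\sum_b \sum_(l < N0.+1) a j (b, l) * (t b * y b l) ^+ d).
    by rewrite pair_bigA; apply: eq_bigr => -[b l].
  apply: eq_bigr => b _; rewrite big_distrl /=.
  apply: eq_bigr => l _; rewrite exprMn; ring.
move=> j; rewrite E; case: (unliftP ord0 j) => [j' ->|->]; first exact: ht.
by apply: big1 => b _; have [_ ->] := Y b; rewrite mul0r.
Qed.
End Sys.

Theorem proposition2p7 (k : fieldType) (K : fieldExtType k) :
  brauer_field k -> brauer_field K.
Proof.
move=> Bk d d_gt0.
have [N HN] := solv_sys d_gt0 Bk (\dim (fullv : {vspace K})).
exists N => n a hn.
have [x [[i0 hi0] hx]] := HN 'I_n (ltac:(by rewrite card_ord))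
   (fun j i => coord (vbasis fullv) j (a i)).
exists (fun i => (x i)%:A); split.
  by exists i0; rewrite scaler_eq0 oner_eq0 orbF.
pose S := \sum_i x i ^+ d *: a i.
have -> : \sum_(i < n) a i * (x i)%:A ^+ d = S.
  by apply: eq_bigr => i _; rewrite exprZn expr1n mulr_algr.
rewrite (coord_vbasis (memvf S)) big1 // => j _.
have -> : coord (vbasis fullv) j S = 0.
  rewrite /S linear_sum -[RHS](hx j); apply: eq_bigr => i _.
  by rewrite linearZ /= mulrC.
by rewrite scale0r.
Qed.
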